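(* Let $(Y,f)$ be an expansive dynamical system with expansiveness constant $\varepsilon_Y$, equipped with an adapted metric. Suppose $y_1\sim_{\mathrm{lcs}}y_2$ with stable local conjugacy $\gamma$. Given $0<\varepsilon\le\varepsilon_Y$, there exist $\delta>0$ and $N\in\mathbb{N}$ such that for every $n\ge N$ the stable local conjugacy \[ f^n\circ\gamma\circ f^{-n}:Y^u(f^n(y_1),\delta)\to Y^u(f^n(y_2),\varepsilon) \] from $f^n(y_1)$ to $f^n(y_2)$ is well defined (i.e. its image is contained in $Y^u(f^n(y_2),\varepsilon)$) and is given by $z\mapsto[z,f^n(y_2)]$ for $z\in Y^u(f^n(y_1),\delta)$.
   Context: $(Y,f)$: compact metric space with homeomorphism $f$; expansive with constant $\varepsilon_Y$: $d(f^ny,f^ny')\le\varepsilon_Y$ for all $n\in\mathbb{Z}$ implies $y=y'$. Local sets $Y^s(y,\varepsilon)=\{z:d(f^ny,f^nz)<\varepsilon\ \forall n\ge0\}$, $Y^u(y,\varepsilon)=\{z:d(f^{-n}y,f^{-n}z)<\varepsilon\ \forall n\ge0\}$; $Y^u(y)$ = unstable class ($d(f^{-n}y,f^{-n}z)\to0$). Bracket: $[a,b]$ is the unique point of $Y^s(a,\varepsilon)\cap Y^u(b,\varepsilon)$ when this is nonempty. Adapted metric: a compatible metric with $\eta>0$, $0<\lambda<1$ such that $f$ contracts by $\lambda$ on $Y^s(y,\eta)$ and $f^{-1}$ contracts by $\lambda$ on $Y^u(y,\eta)$. Stable local conjugacy from $y_1$ to $y_2$: a homeomorphism $\gamma:U\to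 V$ between open neighbourhoods $U\ni y_1$ in $Y^u(y_1)$ and $V\ni y_2$ in $Y^u(y_2)$ with $\gamma(y_1)=y_2$ and $\sup_{z\in U}d(f^kz,f^k\gamma(z))\to0$ as $k\to\infty$; $y_1\sim_{\mathrm{lcs}}y_2$ if one exists. *)

(* Defs.v *)
From Stdlib Require Import Reals Lra Lia.
Open Scope R_scope.

Section Defs.
Context {Y : Type}.

Definition is_metric (d : Y -> Y -> R) : Prop :=
  (forall x y, 0 <= d x y) /\ (forall x y, d x y = 0 <-> x = y) /\
  (forall x y, d x y = d y x) /\ (forall x y z, d x z <= d x y + d y z).

Definition is_compact_metric (d : Y -> Y -> R) : Prop :=
  forall u : nat -> Y, exists (phi : nat -> nat) (l : Y),
    (forall k, (phi k < phi (S k))%nat) /\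
    (forall e, 0 < e -> exists N, forall k, (N <= k)%nat -> d (u (phi k)) l < e).

Definition mcontinuous (d : Y -> Y -> R) (g : Y -> Y) : Prop :=
  forall x e, 0 < e -> exists del, 0 < del /\ forall y, d x y < del -> d (g x) (g y) < e.

Definition is_homeo (d : Y -> Y -> R) (f finv : Y -> Y) : Prop :=
  (forall x, finv (f x) = x) /\ (forall x, f (finv x) = x) /\
  mcontinuous d f /\ mcontinuous d finv.

Definition fpow (f finv : Y -> Y) (n : Z) : Y -> Y :=
  match n with
  | Z0 => fun x => x
  | Zpos p => Nat.iter (Pos.to_nat p) f
  | Zneg p => Nat.iter (Pos.to_nat p) finv
  end.

Definition expansive (d : Y -> Y -> R) (f finv : Y -> Y) (eY : R) : Prop :=
  0 < eY /\
  forall y y', (forall n : Z, d (fpow f finv n y) (fpow f finv n y') <= eY) -> y = y'.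

Definition Ys (d : Y -> Y -> R) (f : Y -> Y) (y : Y) (e : R) (z : Y) : Prop :=
  forall n : nat, d (Nat.iter n f y) (Nat.iter n f z) < e.
Definition Yu (d : Y -> Y -> R) (finv : Y -> Y) (y : Y) (e : R) (z : Y) : Prop :=
  forall n : nat, d (Nat.iter n finv y) (Nat.iter n finv z) < e.

Definition Yu_class (d : Y -> Y -> R) (finv : Y -> Y) (y z : Y) : Prop :=
  forall e, 0 < e -> exists N, forall n, (N <= n)%nat ->
    d (Nat.iter n finv y) (Nat.iter n finv z) < e.

Definition adapted (d : Y -> Y -> R) (f finv : Y -> Y) : Prop :=
  exists eta lam, 0 < eta /\ 0 < lam < 1 /\
    (forall y z w, Ys d f y eta z -> Ys d f y eta w -> d (f z) (f w) <= lam * d z w) /\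
    (forall y z w, Yu d finv y eta z -> Yu d finv y eta w ->
                   d (finv z) (finv w) <= lam * d z w).

(* open subsets of Y^u(y), for the topology on Y^u(y) generated by the
   local unstable sets Y^u(z,e) *)
Definition uopen (d : Y -> Y -> R) (finv : Y -> Y) (y : Y) (A : Y -> Prop) : Prop :=
  (forall z, A z -> Yu_class d finv y z) /\
  (forall z, A z -> exists e, 0 < e /\ forall w, Yu d finv z e w -> A w).

Definition ucont (d : Y -> Y -> R) (finv : Y -> Y) (x x' : Y) (U : Y -> Prop)
  (h : Y -> Y) : Prop :=
  forall B, uopen d finv x' B -> uopen d finv x (fun z => U z /\ B (h z)).

Definition slc (d : Y -> Y -> R) (f finv : Y -> Y) (y1 y2 : Y)
  (U V : Y -> Prop) (gamma : Y -> Y) : Prop :=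
  uopen d finv y1 U /\ U y1 /\ uopen d finv y2 V /\ V y2 /\
  gamma y1 = y2 /\ (forall z, U z -> V (gamma z)) /\
  (exists g : Y -> Y,
     (forall z, V z -> U (g z)) /\
     (forall z, U z -> g (gamma z) = z) /\
     (forall z, V z -> gamma (g z) = z) /\
     ucont d finv y1 y2 U gamma /\ ucont d finv y2 y1 V g) /\
  (forall e, 0 < e -> exists K, forall k, (K <= k)%nat ->
     forall z, U z -> d (Nat.iter k f z) (Nat.iter k f (gamma z)) <= e).

(* w = [a,b] at scale e: the unique point of Y^s(a,e) ∩ Y^u(b,e) *)
Definition is_bracket (d : Y -> Y -> R) (f finv : Y -> Y) (e : R) (a b w : Y) : Prop :=
  Ys d f a e w /\ Yu d finv b e w /\
  forall w', Ys d f a e w' -> Yu d finv b e w' -> w' = w.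

End Defs.

(* Main.v *)
Require Import Defs.
From Stdlib Require Import Reals Lra Lia Arith.
Open Scope R_scope.

Lemma iter_cancel {A : Type} (a b : A -> A) (H : forall x, b (a x) = x) k x :
  Nat.iter k b (Nat.iter k a x) = x.
Proof.
  induction k as [|k IH]; [reflexivity|].
  rewrite Nat.iter_succ_r, Nat.iter_succ, H. exact IH.
Qed.

Lemma iter_le {A : Type} (f finv : A -> A) (H : forall x, finv (f x) = x) k n x :
  (k <= n)%nat -> Nat.iter k finv (Nat.iter n f x) = Nat.iter (n - k) f x.
Proof.
  intros Hk.
  replace (Nat.iter n f x) with (Nat.iter k f (Nat.iter (n-k) f x)).
  - apply iter_cancel; exact H.
  - rewrite <- Nat.iter_add. f_equal. lia.
Qed.

Lemma iter_ge {A : Type} (f finv : A -> A) (H : forall x, finv (f x) = x) k n x :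
  (n <= k)%nat -> Nat.iter k finv (Nat.iter n f x) = Nat.iter (k - n) finv x.
Proof.
  intros Hk.
  replace (Nat.iter k finv (Nat.iter n f x)) with
    (Nat.iter (k-n) finv (Nat.iter n finv (Nat.iter n f x))).
  - rewrite iter_cancel by exact H. reflexivity.
  - rewrite <- Nat.iter_add. f_equal. lia.
Qed.

Lemma Yu_mono {Y : Type} (d : Y -> Y -> R) finv y e e' w :
  Yu d finv y e w -> e <= e' -> Yu d finv y e' w.
Proof. intros H He n. specialize (H n). lra. Qed.

Lemma uopen_ext {Y : Type} (d : Y -> Y -> R) finv y (A B : Y -> Prop) :
  (forall z, A z <-> B z) -> uopen d finv y A -> uopen d finv y B.
Proof.
  intros HAB [H1 H2]. split.
  - intros z Hz. apply H1, HAB, Hz.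
  - intros z Hz. destruct (H2 z (proj2 (HAB z) Hz)) as [e [He He']].
    exists e. split; auto. intros w Hw. apply HAB, He', Hw.
Qed.

Lemma uopen_and {Y : Type} (d : Y -> Y -> R) finv y (A B : Y -> Prop) :
  uopen d finv y A -> uopen d finv y B -> uopen d finv y (fun z => A z /\ B z).
Proof.
  intros [HA1 HA2] [HB1 HB2]. split.
  - intros z [Hz _]. auto.
  - intros z [Ha Hb]. destruct (HA2 z Ha) as [e1 [He1 H1]].
    destruct (HB2 z Hb) as [e2 [He2 H2]].
    exists (Rmin e1 e2). split. apply Rmin_glb_lt; auto.
    intros w Hw. split.
    + apply H1. eapply Yu_mono; [exact Hw|apply Rmin_l].
    + apply H2. eapply Yu_mono; [exact Hw|apply Rmin_r].
Qed.

Lemma uopen_push {Y : Type} (d : Y -> Y -> R) f finv (H : forall x, finv (f x) = x)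
  y n (S : Y -> Prop) :
  uopen d finv y S -> uopen d finv (Nat.iter n f y) (fun u => S (Nat.iter n finv u)).
Proof.
  intros [H1 H2]. split.
  - intros u Hu e He. destruct (H1 _ Hu e He) as [N HN].
    exists (N + n)%nat. intros m Hm.
    rewrite (iter_ge f finv H m n y) by lia.
    replace (Nat.iter m finv u) with (Nat.iter (m-n) finv (Nat.iter n finv u))
      by (rewrite <- Nat.iter_add; f_equal; lia).
    apply HN. lia.
  - intros u Hu. destruct (H2 _ Hu) as [e [He He']]. exists e. split; auto.
    intros w Hw. apply He'. intros k.
    rewrite <- !Nat.iter_add. apply Hw.
Qed.

Lemma iter_cont {Y : Type} (d : Y -> Y -> R) f :
  mcontinuous d f -> forall j, mcontinuous d (Nat.iter j f).
Proof.
  intros Hf j. induction j as [|j IH].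
  - intros x e He. exists e. split; auto.
  - intros x e He. destruct (Hf (Nat.iter j f x) e He) as [d1 [Hd1 H1]].
    destruct (IH x d1 Hd1) as [d2 [Hd2 H2]].
    exists d2. split; auto. intros y Hy. simpl. apply H1, H2, Hy.
Qed.

Lemma fin_cont {Y : Type} (d : Y -> Y -> R) f :
  mcontinuous d f -> forall x e K, 0 < e -> exists r, 0 < r /\
    forall u, d x u < r -> forall j, (j < K)%nat ->
      d (Nat.iter j f x) (Nat.iter j f u) < e.
Proof.
  intros Hf x e K He. induction K as [|K IH].
  - exists 1. split. lra. intros u _ j Hj. lia.
  - destruct IH as [r1 [Hr1 H1]].
    destruct (iter_cont d f Hf K x e He) as [r2 [Hr2 H2]].
    exists (Rmin r1 r2). split. apply Rmin_glb_lt; auto.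
    intros u Hu j Hj.
    assert (Hu1 : d x u < r1) by (eapply Rlt_le_trans; [exact Hu| apply Rmin_l]).
    assert (Hu2 : d x u < r2) by (eapply Rlt_le_trans; [exact Hu| apply Rmin_r]).
    destruct (Nat.eq_dec j K) as [->|Hne].
    + apply H2; auto.
    + apply H1; auto. lia.
Qed.

Lemma uopen_pull {Y : Type} (d : Y -> Y -> R) f finv (H : forall x, finv (f x) = x)
  (Hf : mcontinuous d f) y n (B : Y -> Prop) :
  uopen d finv (Nat.iter n f y) B -> uopen d finv y (fun v => B (Nat.iter n f v)).
Proof.
  intros [H1 H2]. split.
  - intros v Hv e He. destruct (H1 _ Hv e He) as [N HN].
    exists N. intros m Hm. specialize (HN (m + n)%nat ltac:(lia)).
    rewrite !(iter_ge f finv H (m+n) n) in HN by lia.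
    replace (m + n - n)%nat with m in HN by lia. exact HN.
  - intros v Hv. destruct (H2 _ Hv) as [e [He He']].
    destruct (fin_cont d f Hf v e (S n) He) as [r [Hr Hc]].
    exists (Rmin r e). split. apply Rmin_glb_lt; auto.
    intros u Hu. apply He'. intros k.
    destruct (le_lt_dec k n) as [Hk|Hk].
    + rewrite !(iter_le f finv H k n) by lia. apply Hc; [|lia].
      specialize (Hu 0%nat). simpl in Hu.
      eapply Rlt_le_trans; [exact Hu|apply Rmin_l].
    + rewrite !(iter_ge f finv H k n) by lia.
      eapply Rlt_le_trans; [apply Hu|apply Rmin_r].
Qed.

Lemma pow_le1 lam k : 0 <= lam <= 1 -> 0 <= lam ^ k <= 1.
Proof.
  intros Hl. induction k as [|k IH]; simpl. lra. nra.
Qed.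

Lemma uopen_ball {Y : Type} (d : Y -> Y -> R) finv (hd : is_metric d) eta lam
  (Hlam : 0 < lam < 1)
  (Hc : forall y z w, Yu d finv y eta z -> Yu d finv y eta w ->
                   d (finv z) (finv w) <= lam * d z w)
  y e : 0 < e -> e <= eta -> uopen d finv y (Yu d finv y e).
Proof.
  destruct hd as [Hnn [H0 [Hsym Htri]]].
  intros He Heta.
  assert (Hdd : forall x, d x x = 0) by (intros; apply H0; reflexivity).
  assert (Hcon : forall w, Yu d finv y e w -> forall k,
     d (Nat.iter k finv y) (Nat.iter k finv w) <= lam ^ k * d y w).
  { intros w Hw k. induction k as [|k IH].
    - simpl. lra.
    - simpl Nat.iter. eapply Rle_trans.
      + apply (Hc (Nat.iter k finv y)).
        * intros i. rewrite Hdd. lra.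
        * intros i. rewrite <- !Nat.iter_add. specialize (Hw (i + k)%nat). lra.
      + simpl. nra. }
  split.
  - intros w Hw e' He'.
    pose (d0 := d y w).
    assert (Hd0 : 0 <= d0) by apply Hnn.
    assert (Habs : Rabs lam < 1) by (rewrite Rabs_right; lra).
    destruct (pow_lt_1_zero lam Habs (e' / (d0 + 1))) as [N HN].
    { apply Rdiv_lt_0_compat; lra. }
    exists N. intros n Hn. specialize (HN n Hn).
    rewrite Rabs_right in HN by (apply Rle_ge, pow_le; lra).
    assert (Hq : e' / (d0 + 1) * (d0 + 1) = e') by (field; lra).
    specialize (Hcon w Hw n). fold d0 in Hcon.
    assert (0 <= lam ^ n) by (apply pow_le; lra).
    assert (lam ^ n * (d0 + 1) < e' / (d0 + 1) * (d0 + 1))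
      by (apply Rmult_lt_compat_r; lra).
    nra.
  - intros w Hw. exists (e - d y w). split.
    + specialize (Hw 0%nat). simpl in Hw. lra.
    + intros v Hv k. specialize (Hv k). specialize (Hcon w Hw k).
      pose proof (Htri (Nat.iter k finv y) (Nat.iter k finv w) (Nat.iter k finv v)).
      pose proof (pow_le1 lam k ltac:(lra)). pose proof (Hnn y w). nra.
Qed.

Theorem mainTheorem5 (Y : Type) (d : Y -> Y -> R) (f finv : Y -> Y) (eY : R)
  (hd : is_metric d) (hc : is_compact_metric d) (hf : is_homeo d f finv)
  (hexp : expansive d f finv eY) (hadapt : adapted d f finv)
  (y1 y2 : Y) (U V : Y -> Prop) (gamma : Y -> Y)
  (hgamma : slc d f finv y1 y2 U V gamma)
  (eps : R) (heps : 0 < eps) (hepsY : eps <= eY) :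
  exists (delta : R) (N : nat), 0 < delta /\
    forall n : nat, (N <= n)%nat ->
      let x1 := Nat.iter n f y1 in
      let x2 := Nat.iter n f y2 in
      let gn := fun z => Nat.iter n f (gamma (Nat.iter n finv z)) in
      (* f^n o gamma o f^-n is defined on Y^u(f^n y1, delta) *)
      (forall z, Yu d finv x1 delta z -> U (Nat.iter n finv z)) /\
      (* it maps into Y^u(f^n y2, eps) and equals z |-> [z, f^n y2] *)
      (forall z, Yu d finv x1 delta z ->
         Yu d finv x2 eps (gn z) /\ is_bracket d f finv (eps / 2) z x2 (gn z)) /\
      (* and it is a stable local conjugacy from f^n y1 to f^n y2 *)
      slc d f finv x1 x2 (Yu d finv x1 delta)
        (fun w => exists z, Yu d finv x1 delta z /\ w = gn z) gn.
Proof.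
  pose proof hd as hd'.
  destruct hd' as [Hnn [H0 [Hsym Htri]]].
  assert (Hdd : forall x, d x x = 0) by (intros; apply H0; reflexivity).
  destruct hf as [Hfi [Hff [Hcf Hcfi]]].
  destruct hexp as [HeY Hexp].
  destruct hadapt as [eta [lam [Heta [Hlam [_ Hc]]]]].
  destruct hgamma as [HUo [HUy1 [HVo [HVy2 [Hg1 [HUV [[g [HgVU [Hgg [Hgg' [Hcg Hcg']]]]] Hasym]]]]]]].
  destruct (proj2 HUo y1 HUy1) as [e0 [He0 HU0]].
  destruct (Hasym (eps/8)) as [K HK]; [lra|].
  destruct (fin_cont d f Hcf y2 (eps/2) K) as [r [Hr Hrc]]; [lra|].
  set (r' := Rmin eta (Rmin (eps/2) r)).
  assert (Hr'pos : 0 < r') by (unfold r'; repeat apply Rmin_glb_lt; lra).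
  assert (Hr'eta : r' <= eta) by (unfold r'; apply Rmin_l).
  assert (Hr'e : r' <= eps/2) by (unfold r'; eapply Rle_trans; [apply Rmin_r|apply Rmin_l]).
  assert (Hr'r : r' <= r) by (unfold r'; eapply Rle_trans; [apply Rmin_r|apply Rmin_r]).
  pose proof (uopen_ball d finv hd eta lam Hlam Hc y2 r' Hr'pos Hr'eta) as Hball2.
  destruct (Hcg _ Hball2) as [_ Hpre2].
  destruct (Hpre2 y1) as [e1 [He1 HU1]].
  { split; auto. rewrite Hg1. intro k. rewrite Hdd. lra. }
  set (delta := Rmin (Rmin eta e0) (Rmin e1 (eps/8))).
  assert (Hdpos : 0 < delta) by (unfold delta; repeat apply Rmin_glb_lt; lra).
  assert (Hdeta : delta <= eta) by (unfold delta; eapply Rle_trans; [apply Rmin_l|apply Rmin_l]).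
  assert (Hde0 : delta <= e0) by (unfold delta; eapply Rle_trans; [apply Rmin_l|apply Rmin_r]).
  assert (Hde1 : delta <= e1) by (unfold delta; eapply Rle_trans; [apply Rmin_r|apply Rmin_l]).
  assert (Hde8 : delta <= eps/8) by (unfold delta; eapply Rle_trans; [apply Rmin_r|apply Rmin_r]).
  exists delta, K. split; [exact Hdpos|].
  intros n Hn. cbv beta zeta.
  assert (Hw : forall z, Yu d finv (Nat.iter n f y1) delta z ->
     Yu d finv y1 delta (Nat.iter n finv z) /\
     (forall j, (j <= n)%nat -> d (Nat.iter j f y1) (Nat.iter j f (Nat.iter n finv z)) < delta) /\
     Nat.iter n f (Nat.iter n finv z) = z).
  { intros z Hz.
    assert (Ez : Nat.iter n f (Nat.iter n finv z) = z) by (apply iter_cancel; exact Hff).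
    split; [|split; [|exact Ez]].
    - intros k. specialize (Hz (k + n)%nat).
      rewrite (iter_ge f finv Hfi (k+n) n y1) in Hz by lia.
      rewrite Nat.iter_add in Hz. replace (k + n - n)%nat with k in Hz by lia. exact Hz.
    - intros j Hj. specialize (Hz (n - j)%nat). rewrite <- Ez in Hz.
      rewrite !(iter_le f finv Hfi (n-j) n) in Hz by lia.
      replace (n - (n - j))%nat with j in Hz by lia. exact Hz. }
  assert (P1 : forall z, Yu d finv (Nat.iter n f y1) delta z -> U (Nat.iter n finv z)).
  { intros z Hz. apply HU0. eapply Yu_mono; [apply (Hw z Hz)|exact Hde0]. }
  split; [exact P1|].
  assert (P2 : forall z, Yu d finv (Nat.iter n f y1) delta z ->
     Yu d finv (Nat.iter n f y2) (eps/2) (Nat.iter n f (gamma (Nat.iter n finv z))) /\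
     Ys d f z (eps/2) (Nat.iter n f (gamma (Nat.iter n finv z)))).
  { intros z Hz. destruct (Hw z Hz) as [Hw1 [Hw2 Ez]].
    set (w := Nat.iter n finv z) in *.
    assert (HUw : U w) by (apply P1; exact Hz).
    destruct (HU1 w) as [_ Hgw]. { eapply Yu_mono; [exact Hw1|exact Hde1]. }
    assert (Hclose : forall j, (j <= n)%nat ->
        d (Nat.iter j f y2) (Nat.iter j f (gamma w)) < eps/2).
    { intros j Hj. destruct (lt_dec j K) as [HjK|HjK].
      - apply Hrc; auto. specialize (Hgw 0%nat). simpl in Hgw. lra.
      - pose proof (HK j ltac:(lia) y1 HUy1) as A1. rewrite Hg1 in A1.
        pose proof (HK j ltac:(lia) w HUw) as A2.
        pose proof (Hw2 j Hj) as A3.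
        pose proof (Htri (Nat.iter j f y2) (Nat.iter j f y1) (Nat.iter j f w)).
        pose proof (Htri (Nat.iter j f y2) (Nat.iter j f w) (Nat.iter j f (gamma w))).
        rewrite Hsym in A1. lra. }
    split.
    - intros k. destruct (le_lt_dec k n) as [Hk|Hk].
      + rewrite !(iter_le f finv Hfi k n) by lia. apply Hclose. lia.
      + rewrite !(iter_ge f finv Hfi k n) by lia.
        eapply Rlt_le_trans; [apply Hgw|exact Hr'e].
    - intros m.
      replace (Nat.iter m f z) with (Nat.iter m f (Nat.iter n f w)) by (rewrite Ez; reflexivity).
      rewrite <- !Nat.iter_add. pose proof (HK (m + n)%nat ltac:(lia) w HUw). lra. }
  split.
  { intros z Hz. destruct (P2 z Hz) as [Hu2 Hs2]. split.
    - eapply Yu_mono; [exact Hu2|lra].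
    - split; [exact Hs2|split; [exact Hu2|]].
      intros w' Hs Hu. apply Hexp. intros [|p|p]; unfold fpow.
      + specialize (Hs 0%nat). specialize (Hs2 0%nat). simpl in Hs, Hs2.
        pose proof (Htri w' z (Nat.iter n f (gamma (Nat.iter n finv z)))).
        rewrite (Hsym w' z) in *. lra.
      + specialize (Hs (Pos.to_nat p)). specialize (Hs2 (Pos.to_nat p)).
        match type of Hs2 with d ?a ?b < _ => 
          pose proof (Htri (Nat.iter (Pos.to_nat p) f w') a b) end.
        rewrite (Hsym _ (Nat.iter (Pos.to_nat p) f z)) in *. lra.
      + specialize (Hu (Pos.to_nat p)). specialize (Hu2 (Pos.to_nat p)).
        match type of Hu2 with d ?a ?b < _ => 
          pose proof (Htri (Nat.iter (Pos.to_nat p) finv w') a b) end.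
        rewrite (Hsym _ (Nat.iter (Pos.to_nat p) finv (Nat.iter n f y2))) in *. lra. }
  pose proof (uopen_ball d finv hd eta lam Hlam Hc (Nat.iter n f y1) delta Hdpos Hdeta) as HU'o.
  pose proof (uopen_pull d f finv Hfi Hcf y1 n _ HU'o) as HU'pull.
  assert (HVeq : forall v,
    (exists z, Yu d finv (Nat.iter n f y1) delta z /\
        v = Nat.iter n f (gamma (Nat.iter n finv z))) <->
    V (Nat.iter n finv v) /\
    Yu d finv (Nat.iter n f y1) delta (Nat.iter n f (g (Nat.iter n finv v)))).
  { intros v. split.
    - intros [z [Hz ->]]. rewrite (iter_cancel f finv Hfi).
      pose proof (P1 z Hz) as HUw. split; [apply HUV; exact HUw|].
      rewrite Hgg by exact HUw. rewrite (iter_cancel finv f Hff). exact Hz.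
    - intros [Hv Hz]. eexists. split; [exact Hz|].
      rewrite (iter_cancel f finv Hfi), Hgg' by exact Hv.
      rewrite (iter_cancel finv f Hff). reflexivity. }
  assert (Hb : forall z, Yu d finv (Nat.iter n f y1) delta z ->
     Nat.iter n f (g (Nat.iter n finv (Nat.iter n f (gamma (Nat.iter n finv z))))) = z).
  { intros z Hz. rewrite (iter_cancel f finv Hfi), Hgg by (apply P1; exact Hz).
    apply (iter_cancel finv f Hff). }
  split; [exact HU'o|].
  split; [intro k; rewrite Hdd; lra|].
  split.
  { eapply uopen_ext; [|apply (uopen_push d f finv Hfi y2 n _ (Hcg' _ HU'pull))].
    intros v. cbv beta. symmetry. apply HVeq. }
  split.
  { exists (Nat.iter n f y1). split; [intro k; rewrite Hdd; lra|].
    rewrite (iter_cancel f finv Hfi), Hg1. reflexivity. }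
  split; [rewrite (iter_cancel f finv Hfi), Hg1; reflexivity|].
  split; [intros z Hz; exists z; split; auto|].
  split.
  { exists (fun v => Nat.iter n f (g (Nat.iter n finv v))).
    split; [intros v Hv; apply HVeq in Hv; apply Hv|].
    split; [exact Hb|].
    split; [intros v [z [Hz ->]]; rewrite (Hb z Hz); reflexivity|].
    split.
    - intros B HB.
      pose proof (uopen_pull d f finv Hfi Hcf y2 n _ HB) as HBp.
      eapply uopen_ext; [|apply (uopen_push d f finv Hfi y1 n _
          (uopen_and d finv y1 _ _ (Hcg _ HBp) HU'pull))].
      intros z. cbv beta. rewrite (iter_cancel finv f Hff).
      split; [tauto|]. intros [Hz HBz]. split; [split|]; auto.
    - intros B HB.
      pose proof (uopen_pull d f finv Hfi Hcf y1 n _ HB) as HBp.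
      eapply uopen_ext; [|apply (uopen_push d f finv Hfi y2 n _
          (Hcg' _ (uopen_and d finv y1 _ _ HU'pull HBp)))].
      intros v. cbv beta. rewrite HVeq. tauto. }
  intros e He. destruct (Hasym e He) as [K' HK']. exists K'.
  intros k Hk z Hz. destruct (Hw z Hz) as [_ [_ Ez]].
  replace (Nat.iter k f z) with (Nat.iter k f (Nat.iter n f (Nat.iter n finv z)))
    by (rewrite Ez; reflexivity).
  rewrite <- !Nat.iter_add. apply HK'; [lia|]. apply P1. exact Hz.
Qed.
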